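(* Let $G=(V,E)$ be a connected, locally finite, undirected graph, fix $o\in V$ and $\beta>0$. The divisible sandpile $s$ with $s(x)=1$ for $x\ne o$ and $s(o)=1+\beta$ stabilizes on $G$ if and only if simple random walk on $G$ is transient.
   Context: $\Delta u(x)=\sum_{y\sim x}(u(y)-u(x))$. A divisible sandpile $s:V\to\mathbb{R}$ stabilizes if there exists $f:V\to[0,\infty)$ with $s+\Delta f\le 1$ pointwise. *)

(* Defs.v *)
From mathcomp Require Import all_boot all_order all_algebra.
From mathcomp Require Import reals.
Set Implicit Arguments. Unset Strict Implicit. Unset Printing Implicit Defensive.
Import Order.TTheory GRing.Theory Num.Theory.
Local Open Scope ring_scope.

(* A locally finite graph on an eqType V is given by its neighbour lists. *)
Definition simple_graph (V : eqType) (nbrs : V -> seq V) : Prop :=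
  (forall x, uniq (nbrs x)) /\
  (forall x, x \notin nbrs x) /\
  (forall x y, (y \in nbrs x) = (x \in nbrs y)).

Definition connected_graph (V : eqType) (nbrs : V -> seq V) : Prop :=
  forall x y, exists p : seq V,
    path (fun a b => b \in nbrs a) x p /\ last x p = y.

Definition laplacian (R : realType) (V : eqType) (nbrs : V -> seq V)
  (u : V -> R) (x : V) : R :=
  \sum_(y <- nbrs x) (u y - u x).

Definition stabilizes (R : realType) (V : eqType) (nbrs : V -> seq V)
  (s : V -> R) : Prop :=
  exists f : V -> R, (forall x, 0 <= f x) /\
    (forall x, s x + laplacian nbrs f x <= 1).

(* One step of simple random walk applied to a function:
   (P u)(x) = average of u over the neighbours of x
   (an isolated vertex keeps the walker in place). *)
Definition srw_avg (R : realType) (V : eqType) (nbrs : V -> seq V)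
  (u : V -> R) (x : V) : R :=
  if nbrs x is [::] then u x
  else (\sum_(y <- nbrs x) u y) / (size (nbrs x))%:R.

(* hit_prob nbrs o n x = P_x[ tau_o = n ], where tau_o = inf{k >= 0 : X_k = o}. *)
Fixpoint hit_prob (R : realType) (V : eqType) (nbrs : V -> seq V) (o : V)
  (n : nat) : V -> R :=
  match n with
  | 0 => fun x => if x == o then 1 else 0
  | k.+1 => fun x => if x == o then 0 else srw_avg nbrs (hit_prob R nbrs o k) x
  end.

(* P_o[ first return to o happens at time n+1 ]. *)
Definition first_return_prob (R : realType) (V : eqType) (nbrs : V -> seq V)
  (o : V) (n : nat) : R :=
  srw_avg nbrs (hit_prob R nbrs o n) o.

Definition srw_transient (R : realType) (V : eqType) (nbrs : V -> seq V)
  (o : V) : Prop :=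
  exists c : R, c < 1 /\
    forall N, \sum_(n < N) first_return_prob R nbrs o n <= c.

(* Main.v *)
Require Import Defs.
From mathcomp Require Import all_boot all_order all_algebra.
From mathcomp Require Import reals.
From mathcomp Require Import classical_sets.
From mathcomp Require Import ring lra.
Import Order.TTheory GRing.Theory Num.Theory.
Local Open Scope ring_scope.

Section Aux.
Variables (R : realType) (V : eqType) (nbrs : V -> seq V) (o : V).

Lemma sum_cst (I : Type) (s : seq I) (a : R) : \sum_(y <- s) a = a *+ size s.
Proof. by elim: s => [|b s IH]; rewrite ?big_nil ?big_cons ?IH ?mulrS. Qed.

Lemma avg_sum (I : Type) (r : seq I) (F : I -> V -> R) x :
  srw_avg nbrs (fun y => \sum_(i <- r) F i y) x = \sum_(i <- r) srw_avg nbrs (F i) x.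
Proof.
rewrite /srw_avg; case: (nbrs x) => [//|a l].
rewrite exchange_big /= mulr_suml //.
Qed.

Lemma avg_scale (a : R) u x :
  srw_avg nbrs (fun y => a * u y) x = a * srw_avg nbrs u x.
Proof.
rewrite /srw_avg; case: (nbrs x) => [//|b l].
by rewrite -mulr_sumr mulrA.
Qed.

Lemma avg_addc (a : R) u x :
  srw_avg nbrs (fun y => u y + a) x = srw_avg nbrs u x + a.
Proof.
rewrite /srw_avg; case E: (nbrs x) => [//|b l].
rewrite big_split /= sum_cst mulrDl; congr (_ + _).
rewrite -[a *+ _]mulr_natr -mulrA mulfV ?mulr1 //.
by rewrite pnatr_eq0.
Qed.

Lemma avg_cst (c : R) x : srw_avg nbrs (fun _ => c) x = c.
Proof.
rewrite /srw_avg; case E: (nbrs x) => [//|b l].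
by rewrite sum_cst -[c *+ _]mulr_natr -mulrA mulfV ?mulr1 // pnatr_eq0.
Qed.

Lemma avg_mono (u v : V -> R) x :
  (forall y, y \in nbrs x -> u y <= v y) -> u x <= v x ->
  srw_avg nbrs u x <= srw_avg nbrs v x.
Proof.
move=> H1 H2; rewrite /srw_avg; case E: (nbrs x) => [//|b l].
rewrite ler_wpM2r ?invr_ge0 ?ler0n //.
rewrite big_seq_cond [X in _ <= X]big_seq_cond.
apply: ler_sum => y /andP [Hy _]; apply: H1; by rewrite E.
Qed.

Lemma lap_avg (u : V -> R) x :
  laplacian nbrs u x = (size (nbrs x))%:R * (srw_avg nbrs u x - u x).
Proof.
rewrite /laplacian /srw_avg; case E: (nbrs x) => [|b l].
  by rewrite big_nil mul0r.
rewrite sumrB sum_cst mulrBr; congr (_ - _); last by rewrite mulr_natl.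
by rewrite mulrC -mulrA mulVf ?mulr1 // pnatr_eq0.
Qed.

Definition H (N : nat) (x : V) : R := \sum_(k < N) hit_prob R nbrs o k x.

Lemma H0 x : H 0 x = 0. Proof. by rewrite /H big_ord0. Qed.

Lemma H_rec N x : H N.+1 x = if x == o then 1 else srw_avg nbrs (H N) x.
Proof.
rewrite /H big_ord_recl /=.
case: (x == o).
  by rewrite big1 ?addr0.
by rewrite add0r avg_sum; apply: eq_bigr.
Qed.

Lemma sum_fr N : \sum_(n < N) first_return_prob R nbrs o n = srw_avg nbrs (H N) o.
Proof. by rewrite /H avg_sum /first_return_prob. Qed.

Lemma H_bounds N x : 0 <= H N x <= 1.
Proof.
elim: N x => [|N IH] x; first by rewrite H0 lexx ler01.
rewrite H_rec; case: (x == o); first by rewrite ler01 lexx.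
apply/andP; split.
  have := @avg_mono (fun _ => 0) (H N) x; rewrite avg_cst; apply => [y _|];
  [by case/andP: (IH y) | by case/andP: (IH x)].
have := @avg_mono (H N) (fun _ => 1) x; rewrite avg_cst; apply => [y _|];
[by case/andP: (IH y) | by case/andP: (IH x)].
Qed.

Lemma H_step N x : H N x <= H N.+1 x.
Proof.
elim: N x => [|N IH] x; first by rewrite H0; case/andP: (H_bounds 1 x).
rewrite (H_rec N.+1) H_rec; case: (x == o) => //.
by apply: avg_mono => // y _.
Qed.

Lemma H_mono N M x : (N <= M)%N -> H N x <= H M x.
Proof.
move/subnK => <-; elim: (M - N)%N => [|k IH]; first by rewrite add0n.
by apply: le_trans IH _; rewrite addSn H_step.
Qed.

Lemma fin_choice (s : seq V) (P : nat -> V -> Prop) :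
  (forall N M y, (N <= M)%N -> P N y -> P M y) ->
  (forall y, y \in s -> exists N, P N y) -> exists M, forall y, y \in s -> P M y.
Proof.
move=> up; elim: s => [|a s IH] h; first by exists 0%N.
have [Na Ha] := h a (mem_head _ _).
have [Ms HM] : exists M, forall y, y \in s -> P M y.
  by apply: IH => y ys; apply: h; rewrite inE ys orbT.
exists (maxn Na Ms) => y; rewrite inE => /orP [/eqP ->|ys].
  by apply: up Ha; rewrite leq_maxl.
by apply: up (HM y ys); rewrite leq_maxr.
Qed.

End Aux.
Arguments H {R V}.

Theorem lemma2p12 (R : realType) (V : eqType) (nbrs : V -> seq V)
  (o : V) (beta : R) :
  simple_graph nbrs -> connected_graph nbrs -> 0 < beta ->
  (stabilizes nbrs (fun x => if x == o then 1 + beta else 1)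
   <-> srw_transient R nbrs o).
Proof.
move=> _ _ bpos; split.
- case=> f [f0 hf].
  have sup x : x != o -> srw_avg nbrs f x <= f x.
    move=> xo; have := hf x; rewrite (negbTE xo) lap_avg -[X in _ <= X](addr0 1) lerD2l.
    rewrite /srw_avg; case: (nbrs x) => [//|b l].
    by rewrite pmulr_rle0 ?subr_le0 // ltr0n.
  have ho := hf o; rewrite eqxx lap_avg in ho.
  have dpos : (0 < size (nbrs o))%N.
    move: ho; case: (nbrs o) => [|//] /=.
    rewrite mul0r addr0 => h. lra.
  set d : R := (size (nbrs o))%:R in ho.
  have d0 : 0 < d by rewrite ltr0n.
  have ho' : srw_avg nbrs f o <= f o - beta / d.
    rewrite lerBrDr -lerBrDl. rewrite -(ler_pM2l d0) mulrCA mulfV ?mulr1 ?gt_eqF //.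
    by move: ho; rewrite !mulrBr; lra.
  have Pf0 : 0 <= srw_avg nbrs f o.
    have := @avg_mono R V nbrs (fun _ => 0) f o (fun y _ => f0 y) (f0 o).
    rewrite /srw_avg; case: (nbrs o) => [//|b l].
    by rewrite big1 ?mul0r.
  have fo : 0 < f o.
    have : 0 < beta / d by rewrite divr_gt0.
    move=> h; have := le_trans Pf0 ho'; rewrite subr_ge0 => h2.
    by apply: lt_le_trans h h2.
  have key N x : f o * H nbrs o N x <= f x.
    elim: N x => [|N IH] x; first by rewrite H0 mulr0.
    rewrite H_rec; case: eqP => [->|/eqP xo]; first by rewrite mulr1.
    rewrite -avg_scale; apply: le_trans (sup x xo).
    by apply: avg_mono => // y _.
  exists (1 - beta / (d * f o)); split.
    by rewrite ltrBlDr ltrDl divr_gt0 // mulr_gt0.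
  move=> N; rewrite sum_fr -(ler_pM2l fo).
  have -> : f o * (1 - beta / (d * f o)) = f o - beta / d.
    by field; apply/andP; split; rewrite gt_eqF.
  rewrite -avg_scale; apply: le_trans ho'.
  by apply: avg_mono => // y _.
- case=> c [c1 hc].
  have dpos : (0 < size (nbrs o))%N.
    move: (hc 1%N); rewrite big_ord1 /first_return_prob /srw_avg.
    case: (nbrs o) => [|//] /=; rewrite eqxx => h.
    by move: (lt_le_trans c1 h); rewrite ltxx.
  set d : R := (size (nbrs o))%:R.
  have d0 : 0 < d by rewrite ltr0n.
  pose S x : set R := range (fun N => H nbrs o N x).
  have hs x : has_sup (S x).
    split; first by exists (H nbrs o 0 x); exists 0%N.
    exists 1 => _ [N _ <-].
    by case/andP: (@H_bounds R V nbrs o N x).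
  pose h x := sup (S x).
  have Hh N x : H nbrs o N x <= h x by apply: sup_upper_bound => //; exists N.
  have adh e x : 0 < e -> exists N, h x <= H nbrs o N x + e.
    move=> e0; have [_ [N _ <-] lt] := sup_adherent e0 (hs x).
    by exists N; rewrite -lerBlDr ltW.
  have approx e x : 0 < e -> exists M, forall y, y \in x :: nbrs x ->
      h y <= H nbrs o M y + e.
    move=> e0; apply: fin_choice.
      by move=> N M y NM hy; apply: le_trans hy _; rewrite lerD2r H_mono.
    by move=> y _; apply: adh.
  have Ph e x : 0 < e -> exists M,
      srw_avg nbrs h x <= srw_avg nbrs (H nbrs o M) x + e.
    move=> e0; have [M HM] := approx e x e0; exists M.
    rewrite -avg_addc; apply: avg_mono.
      by move=> y yn; apply: HM; rewrite inE yn orbT.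
    by apply: HM; rewrite mem_head.
  have harm x : x != o -> srw_avg nbrs h x <= h x.
    move=> xo; apply/ler_addgt0Pr => e e0.
    have [M HM] := Ph e x e0; apply: le_trans HM _.
    by rewrite lerD2r; apply: le_trans (Hh M.+1 x); rewrite H_rec (negbTE xo).
  have ato : srw_avg nbrs h o <= c.
    apply/ler_addgt0Pr => e e0.
    have [M HM] := Ph e o e0; apply: le_trans HM _.
    by rewrite lerD2r -sum_fr.
  have ho : 1 <= h o by apply: le_trans (Hh 1%N o); rewrite H_rec eqxx.
  have h0 x : 0 <= h x by apply: le_trans (Hh 0%N x); rewrite H0.
  set K := beta / (d * (1 - c)).
  have K0 : 0 < K by rewrite divr_gt0 // mulr_gt0 // subr_gt0.
  exists (fun x => K * h x); split.
    by move=> x; rewrite mulr_ge0 // ltW.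
  move=> x; rewrite lap_avg avg_scale -mulrBr.
  case: eqP => [->|/eqP xo].
    rewrite -/d mulrA.
    have hK : d * K * (1 - c) = beta.
      rewrite /K; field; apply/andP; split; rewrite gt_eqF // subr_gt0 //.
    have : d * K * (srw_avg nbrs h o - h o) <= d * K * (c - 1).
      by apply: ler_wpM2l; [rewrite mulr_ge0 ?ltW | lra].
    move: hK; rewrite mulrBr mulrBr mulrBr; lra.
  rewrite -[X in _ <= X](addr0 1) lerD2l mulrA; apply: mulr_ge0_le0.
    by rewrite mulr_ge0 ?ler0n // ltW.
  by rewrite subr_le0 harm.
Qed.
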